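(* For all $n\ge 2$, $\sum_{i=0}^{n-1} g_i g_{n-1-i}=g_n+f_n$.
   Context: For $x\in S_n$, $\mathrm{ind}_x(a)$ is the position of the value $a$ in $x$, and $\mathrm{small}_{k}(x)$ is the subsequence of $x$ formed by the entries $1,\dots,k$. An occurrence of the bivincular pattern $123^{\star}$ in $x$ is a pair of indices $a<b<n$ with $x_a<x_b$ and $x_{b+1}=x_b+1$. Let $g_n=|\mathrm{Av}_n(132,123^{\star})|$ be the number of permutations in $S_n$ avoiding both the classical pattern $132$ and $123^{\star}$ (with $g_0=1$), and let $f_n$ be the number of $x\in S_n$ avoiding $132$ such that $\mathrm{ind}_x(n)-1=\mathrm{ind}_x(n-1)>1$ and $\mathrm{small}_{n-1}(x)$ avoids $123^{\star}$. *)

(* Defs.v *)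
(* Permutations of S_n are represented as sequences of the
   values 1..n in one-line notation: x is in S_n iff perm_eq x (iota 1 n).
   Positions are 0-indexed here (nth), values are 1..n as in the paper. *)
From mathcomp Require Import all_boot.
Set Implicit Arguments. Unset Strict Implicit. Unset Printing Implicit Defensive.

Definition Sn (n : nat) : seq (seq nat) := permutations (iota 1 n).

Definition contains132 (x : seq nat) : bool :=
  [exists i : 'I_(size x), exists j : 'I_(size x), exists k : 'I_(size x),
     [&& (i < j)%N, (j < k)%N,
         (nth 0 x i < nth 0 x k)%N & (nth 0 x k < nth 0 x j)%N]].

Definition avoids132 (x : seq nat) : bool := ~~ contains132 x.

(* Occurrence of the bivincular pattern 123star: positions a<b<n (1-indexed)
   with x_a < x_b and x_{b+1} = x_b + 1.  With 0-indexed positions: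
   a < b, b+1 < size x. *)
Definition contains123star (x : seq nat) : bool :=
  [exists a : 'I_(size x), exists b : 'I_(size x),
     [&& (a < b)%N, (b.+1 < size x)%N,
         (nth 0 x a < nth 0 x b)%N & nth 0 x b.+1 == (nth 0 x b).+1]].

Definition avoids123star (x : seq nat) : bool := ~~ contains123star x.

Definition ind (x : seq nat) (a : nat) : nat := (index a x).+1.

Definition small (k : nat) (x : seq nat) : seq nat := [seq v <- x | (v <= k)%N].

Definition g (n : nat) : nat :=
  count (fun x => avoids132 x && avoids123star x) (Sn n).

Definition f (n : nat) : nat :=
  count (fun x => [&& avoids132 x,
                     ind x n - 1 == ind x n.-1,
                     (1 < ind x n.-1)%N &
                     avoids123star (small n.-1 x)]) (Sn n).

(* Main.v *)
Require Import Defs.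
From mathcomp Require Import all_boot.
From mathcomp Require Import zify.
Set Implicit Arguments. Unset Strict Implicit. Unset Printing Implicit Defensive.

Definition P132 (x : seq nat) : Prop := exists i j k,
  [/\ i < j, j < k, k < size x, nth 0 x i < nth 0 x k & nth 0 x k < nth 0 x j].
Definition P123 (x : seq nat) : Prop := exists a b,
  [/\ a < b, b.+1 < size x, nth 0 x a < nth 0 x b & nth 0 x b.+1 = (nth 0 x b).+1].

Lemma c132P x : reflect (P132 x) (contains132 x).
Proof.
apply: (iffP existsP).
  case=> i /existsP [j /existsP [k /and4P [h1 h2 h3 h4]]].
  by exists i, j, k; split.
case=> i [j [k [h1 h2 h3 h4 h5]]].
have hj : j < size x by lia.
have hi : i < size x by lia.
exists (Ordinal hi); apply/existsP; exists (Ordinal hj); apply/existsP.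
by exists (Ordinal h3); apply/and4P.
Qed.

Lemma c123P x : reflect (P123 x) (contains123star x).
Proof.
apply: (iffP existsP).
  case=> a /existsP [b /and4P [h1 h2 h3 /eqP h4]].
  by exists a, b; split.
case=> a [b [h1 h2 h3 h4]].
have hb : b < size x by lia.
have ha : a < size x by lia.
exists (Ordinal ha); apply/existsP; exists (Ordinal hb); apply/and4P; split=> //.
by apply/eqP.
Qed.

Lemma nthL (L s : seq nat) a : a < size L -> nth 0 (L ++ s) a = nth 0 L a.
Proof. by move=> h; rewrite nth_cat h. Qed.

Lemma nthR (s R : seq nat) j : nth 0 (s ++ R) (size s + j) = nth 0 R j.
Proof. by rewrite nth_cat ltnNge leq_addr /= addKn. Qed.

Lemma nthC (L R : seq nat) c : nth 0 (L ++ c :: R) (size L) = c.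
Proof. by rewrite nth_cat ltnn subnn. Qed.

Lemma nthR' (L R : seq nat) c j : size L < j ->
  nth 0 (L ++ c :: R) j = nth 0 R (j - (size L).+1).
Proof.
move=> h; rewrite -cat_rcons.
have -> : j = size (rcons L c) + (j - (size L).+1) by rewrite size_rcons; lia.
by rewrite nthR size_rcons; congr nth; lia.
Qed.

Lemma P132_pre L s : P132 L -> P132 (L ++ s).
Proof.
case=> i [j [k [h1 h2 h3 h4 h5]]]; exists i, j, k.
rewrite !nthL ?size_cat //; try lia. split=> //; lia.
Qed.

Lemma P132_suf s R : P132 R -> P132 (s ++ R).
Proof.
case=> i [j [k [h1 h2 h3 h4 h5]]]; exists (size s + i), (size s + j), (size s + k).
rewrite !nthR size_cat; split=> //; lia.
Qed.

Lemma P123_pre L s : P123 L -> P123 (L ++ s).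
Proof.
case=> a [b [h1 h2 h3 h4]]; exists a, b.
rewrite !nthL ?size_cat //; try lia. split=> //; lia.
Qed.

Lemma P123_suf s R : P123 R -> P123 (s ++ R).
Proof.
case=> a [b [h1 h2 h3 h4]]; exists (size s + a), (size s + b).
have -> : (size s + b).+1 = size s + b.+1 by lia.
rewrite !nthR size_cat; split=> //; lia.
Qed.

Lemma P132_shift k L : P132 (map (addn k) L) <-> P132 L.
Proof.
rewrite /P132 size_map; split.
  case=> i [j [k' [h1 h2 h3 h4 h5]]]; exists i, j, k'.
  move: h4 h5; rewrite !(nth_map 0) //; try lia. move=> h4 h5; split=> //; lia.
case=> i [j [k' [h1 h2 h3 h4 h5]]]; exists i, j, k'.
rewrite !(nth_map 0) //; try lia. split=> //; lia.
Qed.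

Lemma P123_shift k L : P123 (map (addn k) L) <-> P123 L.
Proof.
rewrite /P123 size_map; split.
  case=> a [b [h1 h2 h3 h4]]; exists a, b.
  move: h3 h4; rewrite !(nth_map 0) //; try lia. move=> h3 h4; split=> //; lia.
case=> a [b [h1 h2 h3 h4]]; exists a, b.
rewrite !(nth_map 0) //; try lia. split=> //; lia.
Qed.

Lemma pos_cases (L R : seq nat) c j : j < size (L ++ c :: R) ->
  [/\ j < size L, nth 0 (L ++ c :: R) j = nth 0 L j & nth 0 L j \in L] \/
  (j = size L /\ nth 0 (L ++ c :: R) j = c) \/
  [/\ size L < j, j - (size L).+1 < size R,
      nth 0 (L ++ c :: R) j = nth 0 R (j - (size L).+1)
    & nth 0 R (j - (size L).+1) \in R].
Proof.
rewrite size_cat /= => hj.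
have [h|[h|h]] : j < size L \/ size L < j \/ j = size L by lia.
- by left; rewrite nthL // mem_nth.
- right; right; rewrite nthR' //; split=> //; first lia.
  have hh : j - (size L).+1 < size R by lia. exact: mem_nth.
- by right; left; rewrite h nthC.
Qed.

Lemma D132 (L R : seq nat) c : (forall u v, u \in L -> v \in R -> v < u) ->
  (forall u, u \in L -> u < c) -> (forall v, v \in R -> v < c) ->
  P132 (L ++ c :: R) -> P132 L \/ P132 R.
Proof.
move=> HLR HL HR [i [j [k [h1 h2 h3 h4 h5]]]].
have hi : i < size (L ++ c :: R) := ltn_trans (ltn_trans h1 h2) h3.
have hj : j < size (L ++ c :: R) := ltn_trans h2 h3.
case: (pos_cases h3) => [[k1 k2 k3]|[[k1 k2]|[k1 k2 k3 k4]]].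
- left; exists i, j, k.
  move: h4 h5; rewrite !nthL; try lia. by move=> *; split.
- move: h5; rewrite k2; case: (pos_cases hj) => [[j1 j2 j3]|[[j1 j2]|[j1 j2 j3 j4]]]; try lia.
  rewrite j2 => h5; have := HL _ j3; lia.
- case: (pos_cases hi) => [[i1 i2 i3]|[[i1 i2]|[i1 i2 i3 i4]]].
  + move: h4; rewrite i2 k3; have := HLR _ _ i3 k4; lia.
  + move: h4; rewrite i2 k3; have := HR _ k4; lia.
  + right; exists (i - (size L).+1), (j - (size L).+1), (k - (size L).+1).
    case: (pos_cases hj) => [[j1 j2 j3]|[[j1 j2]|[j1 j2 j3 j4]]]; try lia.
    move: h4 h5; rewrite i3 j3 k3 => h4 h5; split=> //; lia.
Qed.

Lemma pos2 (L R : seq nat) j : j < size (L ++ R) ->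
  [/\ j < size L, nth 0 (L ++ R) j = nth 0 L j & nth 0 L j \in L] \/
  [/\ size L <= j, j - size L < size R,
      nth 0 (L ++ R) j = nth 0 R (j - size L)
    & nth 0 R (j - size L) \in R].
Proof.
rewrite size_cat => hj.
have [h|h] : j < size L \/ size L <= j by lia.
- by left; rewrite nthL // mem_nth.
- right; have hn : (j < size L) = false by apply/negbTE; rewrite -leqNgt.
  rewrite nth_cat hn; split=> //; first lia.
  have hh : j - size L < size R by lia. exact: mem_nth.
Qed.

Lemma D123x (L R : seq nat) c : (forall u v, u \in L -> v \in R -> v < u) ->
  (forall u, u \in L -> u < c) -> (forall v, v \in R -> v < c) ->
  P123 (L ++ c :: R) ->
  P123 L \/ P123 R \/ (1 < size L /\ nth 0 L (size L).-1 = c.-1).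
Proof.
move=> HLR HL HR [a [b [h1 h2 h3 h4]]].
have hb : b < size (L ++ c :: R) := ltnW h2.
have ha : a < size (L ++ c :: R) := ltn_trans h1 hb.
case: (pos_cases h2) => [[k1 k2 k3]|[[k1 k2]|[k1 k2 k3 k4]]].
- left; exists a, b.
  move: h3 h4; rewrite !nthL; try lia. by move=> *; split.
- right; right; split; first lia.
  move: h4; rewrite k2 nthL; last lia.
  have -> : (size L).-1 = b by lia.
  move=> ->; done.
- case: (pos_cases hb) => [[j1 j2 j3]|[[j1 j2]|[j1 j2 j3 j4]]]; try lia.
  + move: h4; rewrite k3 j2; have := HR _ k4; lia.
  + case: (pos_cases ha) => [[i1 i2 i3]|[[i1 i2]|[i1 i2 i3 i4]]].
    * move: h3; rewrite i2 j3; have := HLR _ _ i3 j4; lia.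
    * move: h3; rewrite i2 j3; have := HR _ j4; lia.
    * right; left; exists (a - (size L).+1), (b - (size L).+1).
      have e : b.+1 - (size L).+1 = (b - (size L).+1).+1 by lia.
      move: h3 h4; rewrite i3 j3 k3 e => h3 h4; split=> //; lia.
Qed.

Lemma D123s (L R : seq nat) : (forall u v, u \in L -> v \in R -> v < u) ->
  P123 (L ++ R) -> P123 L \/ P123 R.
Proof.
move=> HLR [a [b [h1 h2 h3 h4]]].
have hb : b < size (L ++ R) := ltnW h2.
have ha : a < size (L ++ R) := ltn_trans h1 hb.
case: (pos2 h2) => [[k1 k2 k3]|[k1 k2 k3 k4]].
- left; exists a, b.
  move: h3 h4; rewrite !nthL; try lia. by move=> *; split.
- case: (pos2 hb) => [[j1 j2 j3]|[j1 j2 j3 j4]].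
  + move: h4; rewrite k3 j2; have := HLR _ _ j3 k4; lia.
  + case: (pos2 ha) => [[i1 i2 i3]|[i1 i2 i3 i4]].
    * move: h3; rewrite i2 j3; have := HLR _ _ i3 j4; lia.
    * right; exists (a - size L), (b - size L).
      have e : b.+1 - size L = (b - size L).+1 by lia.
      move: h3 h4; rewrite i3 j3 k3 e => h3 h4; split=> //; lia.
Qed.

Lemma E123 (L R : seq nat) c : uniq L -> (forall u, u \in L -> u < c) ->
  1 < size L -> nth 0 L (size L).-1 = c.-1 -> P123 (L ++ c :: R).
Proof.
move=> uL HL hs he; exists 0, (size L).-1.
have hh : 0 < size L by lia.
have h0 : nth 0 L 0 < c by apply: HL; exact: mem_nth.
have hh2 : (size L).-1 < size L by lia.
have hne : nth 0 L 0 != nth 0 L (size L).-1 by rewrite nth_uniq //; lia.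
have e : (size L).-1.+1 = size L by lia.
rewrite e nthC !nthL ?size_cat /= //.
move: hne; rewrite he => hne; split; try lia.
Qed.

Lemma nthPn (s : seq nat) (u : nat) : u \in s -> exists2 a, a < size s & nth 0 s a = u.
Proof. by case/(nthP 0) => a ha e; exists a. Qed.

Lemma perm_facts n (L R : seq nat) : perm_eq (L ++ n :: R) (iota 1 n) ->
  [/\ uniq L, uniq R, n \notin L, n \notin R &
   (forall u : nat, u \in L ++ R -> 0 < u < n)].
Proof.
move=> hp.
have ux : uniq (L ++ n :: R) by rewrite (perm_uniq hp) iota_uniq.
move: (ux); rewrite cat_uniq /= => /and4P [uL hh nR uR].
have nL : n \notin L by move: hh; rewrite negb_or => /andP [].
split=> // u; rewrite mem_cat => hu.
have : u \in iota 1 n.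
  by rewrite -(perm_mem hp) mem_cat inE; case/orP: hu => ->; rewrite ?orbT.
rewrite mem_iota => /andP [h1 h2].
have : u != n by case/orP: hu => h; apply/eqP => e; [move: nL | move: nR]; rewrite -e h.
move=> /eqP; lia.
Qed.

Lemma perm_sub (s : seq nat) a k : uniq s -> {subset s <= iota a k} -> size s = k ->
  perm_eq s (iota a k).
Proof.
move=> us sub hs.
have hs' : size (iota a k) <= size s by rewrite size_iota hs.
have [_ e] := uniq_min_size us sub hs'.
exact: uniq_perm us (iota_uniq a k) e.
Qed.

Lemma S_struct n (x : seq nat) : 0 < n -> perm_eq x (iota 1 n) -> ~ P132 x ->
  exists L R : seq nat, x = L ++ n :: R /\ (forall u v : nat, u \in L -> v \in R -> v < u).
Proof.
move=> n0 hp h132.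
have hx : n \in x by rewrite (perm_mem hp) mem_iota; lia.
have [L [R ex]] : exists L R : seq nat, x = L ++ n :: R.
  by case/splitPr: hx => L R; exists L, R.
subst x; exists L, R; split=> // u v hu hv.
have [uL uR nL nR hb] := perm_facts hp.
have ux : uniq (L ++ n :: R) by rewrite (perm_uniq hp) iota_uniq.
have hvn : 0 < v < n by apply: hb; rewrite mem_cat hv orbT.
have hneq : u != v.
  apply: contraTneq ux => e; rewrite cat_uniq; apply/and3P => -[_ /hasP hh _].
  by apply: hh; exists u; rewrite // inE e hv orbT.
rewrite ltnNge; apply/negP => huv.
have huv' : u < v by rewrite ltn_neqAle hneq.
case/nthPn: hu => a ha ea; case/nthPn: hv => b hb' eb.
apply: h132; exists a, (size L), (size L + b.+1).
rewrite nthL // nthC nthR' ?size_cat /=; try lia.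
have -> : size L + b.+1 - (size L).+1 = b by lia.
rewrite ea eb; split=> //; lia.
Qed.

Definition build (L' R : seq nat) :=
  map (addn (size R)) L' ++ (size L' + size R).+1 :: R.

Definition Q (x : seq nat) :=
  avoids123star (take (index (size x) x) x) &&
  avoids123star (drop (index (size x) x).+1 x).

Lemma perm_bounds (s : seq nat) k : perm_eq s (iota 1 k) ->
  size s = k /\ forall u : nat, u \in s -> 0 < u <= k.
Proof.
move=> hp; split; first by rewrite (perm_size hp) size_iota.
by move=> u; rewrite (perm_mem hp) mem_iota => /andP [h1 h2]; lia.
Qed.

Lemma build_perm i m L' R : perm_eq L' (iota 1 i) -> perm_eq R (iota 1 m) ->
  perm_eq (build L' R) (iota 1 (i + m).+1).
Proof.
move=> hL hR.
have [sL _] := perm_bounds hL; have [sR _] := perm_bounds hR.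
rewrite /build sL sR.
have hA : perm_eq (map (addn m) L') (iota (1 + m) i).
  by rewrite addnC iotaDl; exact: perm_map.
have -> : iota 1 (i + m).+1 = iota 1 m ++ (iota (1 + m) i ++ [:: (i + m).+1]).
  have -> : (i + m).+1 = m + (i + 1) by lia.
  rewrite !iotaD /=; do 3 f_equal; lia.
rewrite -cat_rcons -cats1 perm_catC.
by apply: perm_cat hR _; apply: perm_cat hA _.
Qed.

Lemma build_av132 i m L' R : perm_eq L' (iota 1 i) -> perm_eq R (iota 1 m) ->
  ~ P132 L' -> ~ P132 R -> ~ P132 (build L' R).
Proof.
move=> hL hR nL nR.
have [sL bL] := perm_bounds hL; have [sR bR] := perm_bounds hR.
rewrite /build => /D132 [].
- move=> u v /mapP [u' hu' ->] hv.
  have := bL _ hu'; have := bR _ hv; rewrite sR; lia.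
- move=> u /mapP [u' hu' ->]; have := bL _ hu'; rewrite sL sR; lia.
- move=> v hv; have := bR _ hv; rewrite sL sR; lia.
- by move/P132_shift.
- done.
Qed.

Lemma av123_shift k L : avoids123star (map (addn k) L) = avoids123star L.
Proof.
rewrite /avoids123star; congr negb.
by apply/c123P/c123P => /P123_shift.
Qed.

Lemma build_parts i (L' R : seq nat) : perm_eq L' (iota 1 i) ->
  [/\ size (build L' R) = (size L' + size R).+1,
      index (size (build L' R)) (build L' R) = size L',
      take (size L') (build L' R) = map (addn (size R)) L' &
      drop (size L').+1 (build L' R) = R].
Proof.
move=> hL; have [sL bL] := perm_bounds hL.
have hs : size (build L' R) = (size L' + size R).+1.
  by rewrite /build size_cat /= size_map; lia.
have nin : (size L' + size R).+1 \notin map (addn (size R)) L'.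
  apply/negP => /mapP [u hu]; have := bL _ hu; lia.
split=> //.
- by rewrite hs /build index_cat (negbTE nin) /= eqxx size_map addn0.
- by rewrite /build take_size_cat // size_map.
- by rewrite /build -cat_rcons drop_size_cat // size_rcons size_map.
Qed.

Lemma build_Q i (L' R : seq nat) : perm_eq L' (iota 1 i) ->
  Q (build L' R) = avoids123star L' && avoids123star R.
Proof.
move=> hL; have [_ hi ht hd] := build_parts R hL.
by rewrite /Q hi ht hd av123_shift.
Qed.

Definition A k := filter avoids132 (Sn k).

Lemma av132P x : reflect (~ P132 x) (avoids132 x).
Proof. by apply: (iffP negP) => h /c132P. Qed.

Lemma mem_A k x : (x \in A k) = avoids132 x && perm_eq x (iota 1 k).
Proof. by rewrite mem_filter /Sn mem_permutations. Qed.

Lemma decomp N (x : seq nat) : x \in A N.+1 ->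
  x \in [seq build L' R | L' <- A (index N.+1 x), R <- A (N - index N.+1 x)].
Proof.
rewrite mem_A => /andP [/av132P n132 hp].
have [L [R [ex HLR]]] := S_struct (ltn0Sn N) hp n132. subst x.
have [uL uR nL nR hb] := perm_facts hp.
have hsz : size L + size R = N.
  by have := perm_size hp; rewrite size_cat /= size_iota; lia.
have -> : index N.+1 (L ++ N.+1 :: R) = size L.
  by rewrite index_cat (negbTE nL) /= eqxx addn0.
have -> : N - size L = size R by lia.
set m := size R.
have bR : forall v : nat, v \in R -> v <= m.
  move=> v hv.
  have hvb : 0 < v < N.+1 by apply: hb; rewrite mem_cat hv orbT.
  have : size L <= size (iota v.+1 (N - v)).
    apply: uniq_leq_size uL _ => u hu.
    have := HLR _ _ hu hv; have : 0 < u < N.+1 by apply: hb; rewrite mem_cat hu.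
    rewrite mem_iota; lia.
  rewrite size_iota; lia.
have bL : forall u : nat, u \in L -> m < u.
  move=> u hu.
  have : size R <= size (iota 1 u.-1).
    apply: uniq_leq_size uR _ => v hv.
    have := HLR _ _ hu hv; have : 0 < v < N.+1 by apply: hb; rewrite mem_cat hv orbT.
    rewrite mem_iota; lia.
  rewrite size_iota /m; have : 0 < u < N.+1 by apply: hb; rewrite mem_cat hu.
  lia.
set L' := map (subn^~ m) L.
have eL : map (addn m) L' = L.
  rewrite /L' -map_comp; apply: map_id_in => u hu /=; have := bL u hu; lia.
have hL' : perm_eq L' (iota 1 (size L)).
  apply: perm_sub; last by rewrite size_map.
  - rewrite map_inj_in_uniq // => u1 u2 h1 h2 /=.
    have := bL _ h1; have := bL _ h2; lia.
  - move=> w /mapP [u hu ->]; rewrite mem_iota.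
    have := bL _ hu; have : 0 < u < N.+1 by apply: hb; rewrite mem_cat hu.
    rewrite /m; lia.
have hR : perm_eq R (iota 1 m).
  apply: perm_sub uR _ (erefl _) => v hv; rewrite mem_iota.
  have := bR _ hv; have : 0 < v < N.+1 by apply: hb; rewrite mem_cat hv orbT.
  lia.
apply/allpairsP; exists (L', R); split=> /=.
- rewrite mem_A hL' andbT; apply/av132P => h.
  apply: n132; apply: P132_pre; rewrite -eL; exact/P132_shift.
- rewrite mem_A hR andbT; apply/av132P => h.
  apply: n132; rewrite -cat_rcons; exact: P132_suf.
- by rewrite /build size_map eL -/m; congr (_ ++ _ :: _); lia.
Qed.

Lemma A_uniq k : uniq (A k).
Proof. exact/filter_uniq/permutations_uniq. Qed.

Lemma slice N i : i <= N ->
  perm_eq [seq x <- A N.+1 | index N.+1 x == i]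
          [seq build L' R | L' <- A i, R <- A (N - i)].
Proof.
move=> hi; apply: uniq_perm.
- exact/filter_uniq/A_uniq.
- apply: allpairs_uniq; try exact: A_uniq.
  move=> [L1 R1] [L2 R2] /allpairsP [[L1' R1'] [h1 h2 [-> ->]]].
  move=> /allpairsP [[L2' R2'] [h3 h4 [-> ->]]] /= e.
  move: h1 h2 h3 h4; rewrite !mem_A => /andP [_ p1] /andP [_ p2] /andP [_ p3] /andP [_ p4].
  have [s1 _] := perm_bounds p1; have [s2 _] := perm_bounds p2.
  have [s3 _] := perm_bounds p3; have [s4 _] := perm_bounds p4.
  have [_ _ t1 d1] := build_parts R1' p1.
  have [_ _ t2 d2] := build_parts R2' p3.
  have eR : R1' = R2' by rewrite -d1 -d2 e s1 s3.
  have eL : map (addn (size R1')) L1' = map (addn (size R2')) L2'.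
    by rewrite -t1 -t2 e s1 s3.
  rewrite eR in eL; move/inj_map: eL => eL.
  by rewrite eR eL //; apply: addnI.
- move=> x; apply/idP/idP.
  + rewrite mem_filter => /andP [/eqP <- hx]; exact: decomp.
  + case/allpairsP => -[L' R] [hL hR ->] /=.
    move: hL hR; rewrite !mem_A => /andP [a1 p1] /andP [a2 p2].
    have [s1 _] := perm_bounds p1.
    have [sz hix _ _] := build_parts R p1.
    have hp := build_perm p1 p2.
    have e : (i + (N - i)).+1 = N.+1 by lia.
    rewrite e in hp.
    have sz' : size (build L' R) = N.+1 by rewrite (perm_size hp) size_iota.
    rewrite mem_filter mem_A hp andbT -{1}sz' hix s1 eqxx /=.
    apply/av132P; apply: build_av132 p1 p2 _ _; exact/av132P.
Qed.


Lemma indE N (L R : seq nat) : perm_eq (L ++ N.+1 :: R) (iota 1 N.+1) -> 0 < N ->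
  N.+1 \notin L ->
  ((ind (L ++ N.+1 :: R) N.+1 - 1 == ind (L ++ N.+1 :: R) N) &&
           (1 < ind (L ++ N.+1 :: R) N)) =
  (1 < size L) && (nth 0 L (size L).-1 == N).
Proof.
move=> hp N0 nL.
have ux : uniq (L ++ N.+1 :: R) by rewrite (perm_uniq hp) iota_uniq.
have hidx : index N.+1 (L ++ N.+1 :: R) = size L.
  by rewrite index_cat (negbTE nL) /= eqxx addn0.
have hN : N \in L ++ N.+1 :: R by rewrite (perm_mem hp) mem_iota; lia.
rewrite /ind hidx; apply/idP/idP.
- case/andP => /eqP e1 h1.
  have hq := nth_index 0 hN.
  have e2 : (size L).-1 = index N (L ++ N.+1 :: R) by lia.
  have hl : index N (L ++ N.+1 :: R) < size L by lia.
  rewrite nthL // in hq.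
  by rewrite e2 hq eqxx andbT; lia.
- case/andP => h1 /eqP h2.
  have hl : (size L).-1 < size L by lia.
  have e : nth 0 (L ++ N.+1 :: R) (size L).-1 = N by rewrite nthL.
  have hl2 : (size L).-1 < size (L ++ N.+1 :: R) by rewrite size_cat /=; lia.
  have ei : index N (L ++ N.+1 :: R) = (size L).-1 by rewrite -{1}e index_uniq.
  rewrite ei; apply/andP; split; [apply/eqP|]; lia.
Qed.

Lemma pw N (x : seq nat) : 0 < N -> x \in Sn N.+1 ->
  (avoids132 x && avoids123star x) +
  [&& avoids132 x, ind x N.+1 - 1 == ind x N.+1.-1,
      (1 < ind x N.+1.-1) & avoids123star (small N.+1.-1 x)]
  = avoids132 x && Q x.
Proof.
move=> N0; rewrite /Sn mem_permutations => hp.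
case h132: (avoids132 x) => //=.
move/av132P: h132 => n132.
have [L [R [ex HLR]]] := S_struct (ltn0Sn N) hp n132. subst x.
have [uL uR nL nR hb] := perm_facts hp.
have ux : uniq (L ++ N.+1 :: R) by rewrite (perm_uniq hp) iota_uniq.
have hsz : size (L ++ N.+1 :: R) = N.+1 by rewrite (perm_size hp) size_iota.
have hidx : index N.+1 (L ++ N.+1 :: R) = size L.
  by rewrite index_cat (negbTE nL) /= eqxx addn0.
have hbL : forall u : nat, u \in L -> u < N.+1.
  by move=> u hu; have := hb u; rewrite mem_cat hu => /(_ isT); lia.
have hbR : forall v : nat, v \in R -> v < N.+1.
  by move=> v hv; have := hb v; rewrite mem_cat hv orbT => /(_ isT); lia.
have hQ : Q (L ++ N.+1 :: R) = avoids123star L && avoids123star R.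
  rewrite /Q hsz hidx take_size_cat // -cat_rcons drop_size_cat //.
  by rewrite size_rcons.
have hsmall : small N (L ++ N.+1 :: R) = L ++ R.
  rewrite /small filter_cat /= ltnn.
  congr (_ ++ _); apply/all_filterP/allP => u hu /=.
  - by have := hbL u hu.
  - by have := hbR u hu.
have hav_s : avoids123star (L ++ R) = avoids123star L && avoids123star R.
  rewrite /avoids123star -negb_or; congr negb.
  apply/c123P/orP.
  - by case/(D123s HLR) => h; [left | right]; apply/c123P.
  - by case=> /c123P h; [apply: P123_pre | apply: P123_suf].
set E := (1 < size L) && (nth 0 L (size L).-1 == N).
have hav_x : avoids123star (L ++ N.+1 :: R) =
    avoids123star L && avoids123star R && ~~ E.
  rewrite /avoids123star -!negb_or; congr negb.
  apply/c123P/idP.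
  - case/(D123x HLR hbL hbR) => [h|[h|[h1 h2]]].
    + by apply/orP; left; apply/orP; left; apply/c123P.
    + by apply/orP; left; apply/orP; right; apply/c123P.
    + by apply/orP; right; rewrite /E h1 h2 /= eqxx.
  - case/orP => [/orP [] /c123P h|].
    + exact: P123_pre.
    + rewrite -cat_rcons; exact: P123_suf.
    + case/andP => h1 /eqP h2; apply: E123 => //.
have hE := indE hp N0 nL.
rewrite andbA hE hsmall hav_s hav_x hQ.
rewrite -/E; clear hav_x hE; clearbody E.
by case: (avoids123star L); case: (avoids123star R); case: E.
Qed.

Lemma count_add (T : eqType) (a b c : pred T) (s : seq T) :
  (forall x, x \in s -> a x + b x = c x) -> count a s + count b s = count c s.
Proof.
elim: s => //= y s IH H.
have := H y (mem_head _ _).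
have := IH (fun x hx => H x (@mem_behead _ (y :: s) _ hx)).
lia.
Qed.

Lemma count_allpairs (F : seq nat -> seq nat -> seq nat) (P : pred (seq nat))
  (a b : pred (seq nat)) (s t : seq (seq nat)) :
  (forall x y, x \in s -> y \in t -> P (F x y) = a x && b y) ->
  count P [seq F x y | x <- s, y <- t] = count a s * count b t.
Proof.
elim: s => //= x s IH H.
rewrite count_cat count_map IH; last first.
  by move=> x' y hx hy; apply: H => //; rewrite inE hx orbT.
rewrite mulnDl; congr (_ + _).
rewrite (@eq_in_count _ _ (fun y => a x && b y)); last first.
  by move=> y hy /=; apply: H => //; rewrite inE eqxx.
by case: (a x) => /=; rewrite ?mul1n ?mul0n ?count_pred0.
Qed.

Lemma count_split (T : eqType) (P : pred T) (h : T -> nat) (s : seq T) n :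
  \sum_(i < n) count (fun x => P x && (h x == i)) s = count (fun x => P x && (h x < n)) s.
Proof.
elim: n => [|n IH].
  rewrite big_ord0 (@eq_count _ _ pred0) ?count_pred0 // => x /=; by rewrite ltn0 andbF.
rewrite big_ord_recr /= IH; apply: count_add => x _ /=.
case: (P x) => //=.
case: (ltngtP (h x) n) => e /=; rewrite ?e ?ltnS ?eqxx; try lia.
Qed.

Lemma gA k : g k = count avoids123star (A k).
Proof. by rewrite /g /A count_filter; apply: eq_count => x /=; rewrite andbC. Qed.

Theorem lemma3p20 (n : nat) (hn : (2 <= n)%N) :
  \sum_(i < n) g i * g (n.-1 - i) = g n + f n.
Proof.
case: n hn => [|N] // hN; have N0 : 0 < N by lia.
rewrite /g /f (@count_add _ _ _ (fun x => avoids132 x && Q x)); last first.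
  by move=> x hx; apply: pw.
have -> : count (fun x => avoids132 x && Q x) (Sn N.+1) = count Q (A N.+1).
  by rewrite /A count_filter; apply: eq_count => x /=; rewrite andbC.
have -> : count Q (A N.+1) =
    count (fun x => Q x && (index N.+1 x < N.+1)) (A N.+1).
  apply: eq_in_count => x; rewrite mem_A => /andP [_ hp] /=.
  have hx : N.+1 \in x by rewrite (perm_mem hp) mem_iota; lia.
  have := index_mem N.+1 x; rewrite hx (perm_size hp) size_iota => ->.
  by rewrite andbT.
rewrite -count_split; apply: eq_bigr => -[i hi] _ /=.
rewrite -/(g i) -/(g (N - i)).
have -> : count (fun x => Q x && (index N.+1 x == i)) (A N.+1) =
    count Q [seq x <- A N.+1 | index N.+1 x == i].
  by rewrite [RHS]count_filter.
have hiN : i <= N by lia.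
rewrite (permP (slice hiN)).
rewrite (@count_allpairs _ _ avoids123star avoids123star).
  by rewrite !gA.
move=> L' R; rewrite mem_A => /andP [_ p1] _.
exact: build_Q p1.
Qed.
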